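(* Let $q$ be a prime power, let $\lambda \in \mathbb{F}_{q^n}\setminus\mathbb{F}_q$, $t = [\mathbb{F}_q(\lambda):\mathbb{F}_q]$, let $0 < m < t$, let $\overline{S}$ be an $\mathbb{F}_{q^t}$-subspace of $\mathbb{F}_{q^n}$ of $\mathbb{F}_{q^t}$-dimension $l>0$ with $\overline{S} \cap \mathbb{F}_{q^t} = \{0\}$, and let $S = \overline{S} \oplus \langle 1, \lambda, \ldots, \lambda^{m-1}\rangle_{\mathbb{F}_q}$. If $b \in \mathbb{F}_{q^t}^*$, then \[ S \cap bS = \overline{S} \oplus \left(\langle 1, \lambda, \ldots, \lambda^{m-1}\rangle_{\mathbb{F}_q} \cap b\langle 1, \lambda, \ldots, \lambda^{m-1}\rangle_{\mathbb{F}_q}\right). \] *)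

(* Defs.v *)
From HB Require Import structures.
From mathcomp Require Import all_boot all_order all_algebra all_field.
Set Implicit Arguments. Unset Strict Implicit. Unset Printing Implicit Defensive.
Import GRing.Theory.
Local Open Scope ring_scope.
Local Open Scope vspace_scope.

Definition powspan (F : fieldType) (L : fieldExtType F) (lam : L) (m : nat)
  : {vspace L} := <<[seq (lam ^+ i)%R | i <- iota 0 m]>>%VS.

(* Main.v *)
Require Import Defs.
From HB Require Import structures.
From mathcomp Require Import all_boot all_order all_algebra all_field.
From mathcomp Require Import ring.
Import GRing.Theory.
Local Open Scope ring_scope.

Theorem lemma4p4 (F : finFieldType) (L : fieldExtType F) (lam : L)
  (lam_notin : lam \notin 1%VS)
  (t m l : nat) (ht : t = \dim <<1%VS; lam>>%VS)
  (hm0 : (0 < m)%N) (hmt : (m < t)%N)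
  (Sbar : {vspace L})
  (hSbar_mod : (<<1%VS; lam>>%VS * Sbar <= Sbar)%VS)
  (hl : (0 < l)%N) (hdim : \dim Sbar = (l * t)%N)
  (hcap : (Sbar :&: <<1%VS; lam>>%VS)%VS = 0%VS)
  (S : {vspace L}) (hS : S = (Sbar + powspan lam m)%VS)
  (b : L) (hb : b \in <<1%VS; lam>>%VS) (hb0 : b != 0) :
  (S :&: (<[b]> * S))%VS
    = (Sbar + (powspan lam m :&: (<[b]> * powspan lam m)))%VS.
Proof.
set K := <<1%VS; lam>>%VS.
set P := powspan lam m.
have PK : (P <= K)%VS.
  apply/span_subvP => _ /mapP[i _ ->].
  by apply: rpredX; apply: memv_adjoin.
have mulS : forall (V : {vspace L}) x, x \in (<[b]> * V)%VS ->
    exists2 v, v \in V & x = b * v.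
  move=> V x; rewrite prodvC => /memv_cosetP[v Vv ->]; exists v => //.
  by rewrite mulrC.
have bS : forall (V : {vspace L}) v, v \in V -> b * v \in (<[b]> * V)%VS.
  by move=> V v Vv; apply: memv_mul; rewrite ?memv_line.
have SbK : forall s, s \in Sbar -> forall k, k \in K -> k * s \in Sbar.
  by move=> s Ss k Kk; apply: (subvP hSbar_mod); apply: memv_mul.
apply: subv_anti; apply/andP; split; last first.
  rewrite subv_add subv_cap; apply/andP; split; first (apply/andP; split).
  - by rewrite hS addvSl.
  - apply/subvP => s Ss.
    have -> : s = b * (b^-1 * s) by rewrite mulrA mulfV // mul1r.
    apply: bS; rewrite hS; apply: (subvP (addvSl _ _)).
    by apply: SbK => //; rewrite memvV.
  - rewrite subv_cap; apply/andP; split.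
      by apply: subv_trans (capvSl _ _) _; rewrite hS addvSr.
    apply: subv_trans (capvSr _ _) _.
    by apply/subvP => x /mulS[v Pv ->]; apply: bS; rewrite hS; apply: (subvP (addvSr _ _)).
apply/subvP => x /memv_capP[xS /mulS[y yS ex]].
move: xS yS; rewrite hS => /memv_addP[s1 s1S [p1 p1P e0]] /memv_addP[s2 s2S [p2 p2P ey]].
rewrite e0; have E : s1 + p1 = b * (s2 + p2) by rewrite -e0 ex ey.
have h1 : s1 - b * s2 \in Sbar by rewrite rpredB // SbK.
have h2 : s1 - b * s2 \in K.
  have -> : s1 - b * s2 = b * p2 - p1.
    by rewrite -[s1](addrK p1) E mulrDr; ring.
  rewrite /K; apply: rpredB; last exact: (subvP PK).
  by apply: rpredM => //; exact: (subvP PK).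
have : s1 - b * s2 \in (Sbar :&: K)%VS by rewrite memv_cap h1 h2.
rewrite hcap memv0 subr_eq0 => /eqP e1.
move: E; rewrite e1 mulrDr => /addrI e2.
apply: memv_add; first by apply: SbK.
by rewrite memv_cap p1P e2 bS.
Qed.
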